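(* Let $M$ be a complete pointed metric space, $k\in\mathbb N$, and let $(\gamma_n)_n=\big(\sum_{i=1}^k a_i(n)\delta(x_i(n))\big)_n\subset\mathcal{FS}_k(M)$ (with $a_i(n)\in\mathbb K$, $x_i(n)\in M$) be a sequence converging weakly to an element $\gamma\in\mathcal{FS}_k(M)$. Then for every $p\in\mathrm{supp}(\gamma)$ there exists $1\le m\le k$ such that $\liminf_{n\to\infty} d(x_m(n),p)=0$.
   Context: Scalars are $\mathbb K=\mathbb R$ or $\mathbb C$. For a pointed metric space $(M,d,0_M)$, $\mathrm{Lip}_0(M)$ denotes the Banach space of Lipschitz functions $g\colon M\to\mathbb K$ with $g(0_M)=0$ normed by the best Lipschitz constant; $\delta(x)\in\mathrm{Lip}_0(M)^*$ is evaluation at $x$ (note $\delta(0_M)=0$); the Lipschitz-free space $\mathcal F(M)$ is the norm-closed linear span of $\{\delta(x):x\in M\}$ in $\mathrm{Lip}_0(M)^*$, with dual $\mathrm{Lip}_0(M)$. For a closed $K\subset M$ with $0_M\in K$, $\mathcal F(K)$ is identified with the closed span of $\{\delta(x):x\in K\}$ in $\mathcal F(M)$. The support $\mathrm{supp}(\gamma)$ of $\gamma\in\mathcal F(M)$ is the smallest closed $K\subset M$ with $\gamma\in\mathcal F(K)$. $\mathcal{FS}_k(M)$ is the set of $\gamma\in\mathcal F(M)$ whose support is finite with at most $k$ points; equivalently $\gamma=\sum_{i=1}^k a_i\delta(x_i)$. *)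

(* Defs.v *)
From HB Require Import structures.
From mathcomp Require Import all_boot all_order all_algebra.
From mathcomp Require Import all_classical all_reals all_analysis.
From mathcomp Require Import complex.
Set Implicit Arguments. Unset Strict Implicit. Unset Printing Implicit Defensive.
Import Order.TTheory GRing.Theory Num.Theory.
Import numFieldNormedType.Exports.
Local Open Scope classical_set_scope.
Local Open Scope ring_scope.

Definition Scal (R : realType) (b : bool) : numFieldType :=
  if b then (R[i] : numFieldType) else (R : numFieldType).

Definition ofR (R : realType) (b : bool) : R -> Scal R b :=
  match b as b0 return R -> Scal R b0 with
  | true => fun r => (r%:C)%C
  | false => fun r => r
  end.

Section Defs.
Variables (R : realType) (b : bool).
Local Notation K := (Scal R b).
Local Notation ι := (@ofR R b).
Variables (T : Type) (d : T -> T -> R).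

Definition is_metric : Prop :=
  [/\ forall x y, d x y = 0 <-> x = y,
      forall x y, d x y = d y x &
      forall x y z, d x z <= d x y + d y z].

Definition metric_cvg (u : nat -> T) (l : T) : Prop :=
  forall e : R, 0 < e -> exists N : nat, forall n, (N <= n)%N -> d (u n) l < e.

Definition metric_cauchy (u : nat -> T) : Prop :=
  forall e : R, 0 < e -> exists N : nat,
    forall m n, (N <= m)%N -> (N <= n)%N -> d (u m) (u n) < e.

Definition metric_complete : Prop :=
  forall u, metric_cauchy u -> exists l, metric_cvg u l.

Definition metric_closed (A : set T) : Prop :=
  forall (u : nat -> T) (l : T), (forall n, A (u n)) -> metric_cvg u l -> A l.

Definition lipschitz_with (L : R) (f : T -> K) : Prop :=
  forall x y, `|f x - f y| <= ι (L * d x y).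

Variable x0 : T.

Definition Lip0 (f : T -> K) : Prop :=
  f x0 = 0 /\ exists L : R, lipschitz_with L f.

Definition Lip0_ball (f : T -> K) : Prop := f x0 = 0 /\ lipschitz_with 1 f.

(* the action of the finitely supported element sum_i c_i delta(z_i) on f *)
Definition pairing (n : nat) (c : 'I_n -> K) (z : 'I_n -> T) (f : T -> K) : K :=
  \sum_(i < n) c i * f (z i).

(* sum_i c_i delta(z_i) belongs to F(A), the closed linear span of
   {delta(x) : x in A} in Lip_0(M)^* (dual norm) *)
Definition in_FA (A : set T) (n : nat) (c : 'I_n -> K) (z : 'I_n -> T) : Prop :=
  forall e : R, 0 < e -> exists (m : nat) (c' : 'I_m -> K) (z' : 'I_m -> T),
    (forall j, A (z' j)) /\
    forall f, Lip0_ball f -> `|pairing c z f - pairing c' z' f| <= ι e.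

(* p belongs to supp(sum_i c_i delta(z_i)) = the smallest closed A with
   the element in F(A), i.e. the intersection of all such A *)
Definition in_supp (n : nat) (c : 'I_n -> K) (z : 'I_n -> T) (p : T) : Prop :=
  forall A : set T, metric_closed A -> in_FA A c z -> A p.

(* weak convergence in F(M) (whose dual is Lip_0(M)) of
   gamma_j = sum_i a j i delta(x j i) to gamma = sum_i c_i delta(z_i) *)
Definition weak_cvg (k : nat) (a : nat -> 'I_k -> K) (x : nat -> 'I_k -> T)
  (n : nat) (c : 'I_n -> K) (z : 'I_n -> T) : Prop :=
  forall f, Lip0 f -> (fun j => pairing (a j) (x j) f) @ \oo --> pairing c z f.

End Defs.

(* Main.v *)
Require Import Defs.
From HB Require Import structures.
From mathcomp Require Import all_boot all_order all_algebra.
From mathcomp Require Import all_classical all_reals all_analysis.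
From mathcomp Require Import complex lra.
Import Order.TTheory GRing.Theory Num.Theory.
Import numFieldNormedType.Exports.
Local Open Scope classical_set_scope.
Local Open Scope ring_scope.

Section I.
Variables (R : realType) (b : bool).
Lemma ofR0 : @ofR R b 0 = 0.
Proof. by case: b. Qed.
Lemma ofRB x y : @ofR R b (x - y) = ofR b x - ofR b y.
Proof. case: b => //=. by rewrite rmorphB. Qed.
Lemma ofR_le x y : (@ofR R b x <= ofR b y) = (x <= y).
Proof. case: b => //=; exact: lecR. Qed.
Lemma ofR_eq0 x : (@ofR R b x == 0) = (x == 0).
Proof. case: b => //=. by rewrite -(inj_eq (@complexI _)) rmorph0. Qed.
Lemma ofR_norm x : `|@ofR R b x| = ofR b `|x|.
Proof. case: b => //=. by rewrite normc_def /= expr0n /= addr0 sqrtr_sqr. Qed.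
End I.
Lemma liminf_pos (R : realType) (u : nat -> R) : (forall n, 0 <= u n) ->
  limn_einf (fun n => (u n)%:E) != 0%E ->
  exists2 r, 0 < r & exists N, forall n, (N <= n)%N -> r <= u n.
Proof.
move=> u0 h.
set v := (fun n => (u n)%:E).
have e0 : forall n, (0 <= einfs v n)%E.
  move=> n; apply: le_ereal_inf_tmp => _ [m _ <-]; by rewrite lee_fin.
have : (0 < limn_einf v)%E.
  rewrite lt0e h /= limn_einf_lim.
  apply: lime_ge; first exact: is_cvg_einfs.
  by apply: nearW.
rewrite limn_einf_lim (cvg_lim _ (@cvg_einfs_sup _ v)) //.
move=> /ereal_sup_gt[_ [n _ <-]] vn.
have hle : forall m, (n <= m)%N -> (einfs v n <= (u m)%:E)%E.
  by move=> m nm; apply: ereal_inf_lbound; exists m.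
move: vn hle; case: (einfs v n) => [r| |] //.
- rewrite lte_fin => r0 hle; exists r => //; exists n => m nm.
  by rewrite -lee_fin; apply: hle.
- by move=> _ hle; have := hle n (leqnn n).
Qed.

Lemma fin_lb (R : realType) (k : nat) (h : 'I_k -> R) :
  (forall i, 0 < h i) -> exists2 s, 0 < s & forall i, s <= h i.
Proof.
move=> hp; exists (\big[Num.min/1]_i h i).
  by apply: (big_ind (fun v => 0 < v)) => // u v u0 v0; rewrite lt_min u0.
move=> i; rewrite (bigD1 i) //=; by rewrite ge_min lexx.
Qed.

Lemma fin_ub (k : nat) (N : 'I_k -> nat) : exists M, forall i, (N i <= M)%N.
Proof. by exists (\max_i N i) => i; apply: leq_bigmax. Qed.

Lemma max0_lip (R : realType) (u v : R) :
  `|Order.max (0:R) u - Order.max (0:R) v| <= `|u - v|.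
Proof.
case: (lerP 0 u) => hu; case: (lerP 0 v) => hv.
- by [].
- rewrite subr0 (ger0_norm hu) (ger0_norm (_ : 0 <= u - v)); lra.
- rewrite sub0r normrN (ger0_norm hv) (ler0_norm (_ : u - v <= 0)); lra.
- by rewrite subrr normr0.
Qed.

Section Main.
Variables (R : realType) (T : Type) (d : T -> T -> R).
Hypothesis hm : is_metric d.
Lemma d_refl x : d x x = 0. Proof. by case: hm => h _ _; apply/h. Qed.
Lemma d_ge0 x y : 0 <= d x y.
Proof.
case: hm => h1 hs ht; have := ht x y x; rewrite d_refl (hs y x); lra.
Qed.
Lemma d_gt0 x y : x <> y -> 0 < d x y.
Proof.
move=> xy; rewrite lt_def d_ge0 andbT; apply/eqP => e; apply: xy.
by case: hm => h _ _; apply/h.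
Qed.
End Main.
Arguments d_refl {R T d}.
Arguments d_ge0 {R T d}.
Arguments d_gt0 {R T d}.

Theorem lemma2p2 (R : realType) (b : bool)
  (T : Type) (d : T -> T -> R) (x0 : T)
  (hmetric : is_metric d) (hcomplete : metric_complete d)
  (k : nat) (a : nat -> 'I_k -> Scal R b) (x : nat -> 'I_k -> T)
  (c : 'I_k -> Scal R b) (z : 'I_k -> T)
  (hcvg : weak_cvg d x0 a x c z)
  (p : T) (hp : in_supp d x0 c z p) :
  exists m : 'I_k, limn_einf (fun n => (d (x n m) p)%:E) = 0%E.
Proof.
case: (pselect (exists m : 'I_k, limn_einf (fun n => (d (x n m) p)%:E) = 0%E))
  => // hn; exfalso.
have hm : forall m : 'I_k, exists rN : R * nat, 0 < rN.1 /\
    forall n, (rN.2 <= n)%N -> rN.1 <= d (x n m) p.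
  move=> m; have := @liminf_pos R (fun n => d (x n m) p) (fun n => d_ge0 hmetric _ _).
  case.
    by apply/eqP => e; apply: hn; exists m.
  by move=> r r0 [N hN]; exists (r, N).
have [rN hrN] := boolp.choice hm.
have [r r0 hr] := @fin_lb R k (fun m => (rN m).1) (fun m => (hrN m).1).
have [N hN] := @fin_ub k (fun m => (rN m).2).
have hx : forall m n, (N <= n)%N -> r <= d (x n m) p.
  move=> m n Nn; apply: le_trans (hr m) _; apply: (hrN m).2.
  exact: leq_trans (hN m) Nn.
pose h i := if `[< z i = p >] then r else Order.min r (d (z i) p).
have h0 : forall i, 0 < h i.
  move=> i; rewrite /h; case: asboolP => // zp.
  by rewrite lt_min r0 (d_gt0 hmetric).
have [s1 s10 hs1] := @fin_lb R k h h0.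
pose s0 := if `[< x0 = p >] then r else Order.min r (d x0 p).
have s00 : 0 < s0.
  rewrite /s0; case: asboolP => // zp.
  by rewrite lt_min r0 (d_gt0 hmetric).
pose s := Order.min s0 s1.
have s0' : 0 < s by rewrite lt_min s00 s10.
have sr : s <= r.
  rewrite ge_min; apply/orP; left; rewrite /s0; case: asboolP => // _.
  by rewrite ge_min lexx.
have sz : forall i, z i <> p -> s <= d (z i) p.
  move=> i zp; rewrite ge_min; apply/orP; right; apply: le_trans (hs1 i) _.
  by rewrite /h; case: asboolP => // _; rewrite ge_min lexx orbT.
have sx0 : x0 <> p -> s <= d x0 p.
  move=> zp; rewrite ge_min; apply/orP; left.
  by rewrite /s0; case: asboolP => // _; rewrite ge_min lexx orbT.
pose A := fun y => s <= d y p.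
have Ap : ~ A p by rewrite /A (d_refl hmetric) leNgt s0'.
apply: Ap; apply: (hp A).
  move=> u l hu hul; rewrite /A; apply/ler_addgt0Pr => e e0.
  have [M hM] := hul e e0; have := hM M (leqnn M); have := hu M; rewrite /A.
  case: hmetric => _ _ ht; have := ht (u M) l p; lra.
pose C := \sum_(i < k | `[< z i = p >]) c i.
have hC : x0 <> p -> C = 0.
  move=> xp.
  pose g := fun y => ofR b (Order.max (0:R) (s - d y p)).
  have Lg : Lip0 d x0 g.
    split; first by rewrite /g max_l ?ofR0 // subr_le0 sx0.
    exists 1 => u v; rewrite /g -ofRB ofR_norm ofR_le mul1r.
    apply: (le_trans (@max0_lip R (s - d u p) (s - d v p))); rewrite ler_norml.
    case: hmetric => _ hs ht; have := ht v u p; have := ht u v p.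
    rewrite (hs v u); lra.
  have h1 := hcvg g Lg.
  have hz : (fun n => pairing (a n) (x n) g) @ \oo --> (0 : Scal R b).
    apply: cvg_trans (@cvg_cst _ (0 : Scal R b) nat \oo _); apply: near_eq_cvg.
    near=> n; rewrite /pairing big1 // => i _.
    rewrite /g max_l ?ofR0 ?mulr0 // subr_le0; apply: le_trans sr (hx i n _).
    by near: n; exists N.
  have e0 : pairing c z g = 0 by apply: (@cvg_unique _ (@norm_hausdorff _ _) _ _ _ _ h1 hz).
  have e1 : pairing c z g = C * ofR b s.
    rewrite /pairing /C mulr_suml [RHS]big_mkcond; apply: eq_bigr => i _ /=.
    rewrite /g; case: asboolP => [->|zp].
      by rewrite (d_refl hmetric) subr0 max_r // ltW.
    by rewrite max_l ?ofR0 ?mulr0 ?mul0r // subr_le0 sz.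
  move: e0; rewrite e1 => /eqP; rewrite mulf_eq0 ofR_eq0 => /orP[/eqP|] //.
  by rewrite gt_eqF.
have hdiff : forall f, Lip0_ball d x0 f -> pairing c z f = \sum_i
    ((if `[< z i = p >] then 0 else c i) * f (z i)) + C * f p.
  move=> f _; rewrite /pairing /C mulr_suml [X in _ + X]big_mkcond -big_split.
  apply: eq_bigr => i _ /=; case: asboolP => [zp|_]; rewrite ?zp.
    by rewrite mul0r add0r.
  by rewrite addr0.
have hCf : forall f, Lip0_ball d x0 f -> C * f p = 0.
  move=> f [f0 _]; case: (pselect (x0 = p)) => [<-|xp].
    by rewrite f0 mulr0.
  by rewrite hC // mul0r.
move=> e e0.
have he : `|0 : Scal R b| <= ofR b e by rewrite normr0 -(ofR0 R b) ofR_le ltW.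
case: (pselect (exists w, A w)) => [[w Aw]|noA].
  exists k, (fun i => if `[< z i = p >] then 0 else c i),
    (fun i => if `[< z i = p >] then w else z i); split.
    by move=> j; case: asboolP => // zp; rewrite /A sz.
  move=> f hf; rewrite hdiff // hCf // addr0 /pairing -sumrB big1 //.
  move=> i _; case: asboolP => _; last by rewrite subrr.
  by rewrite !mul0r subrr.
have zpe : forall i, z i = p.
  move=> i; case: (pselect (z i = p)) => // zp; exfalso; apply: noA.
  by exists (z i); apply: sz.
have x0p : x0 = p.
  case: (pselect (x0 = p)) => // zp; exfalso; apply: noA.
  by exists x0; apply: sx0.
exists 0%N, (fun _ => 0), (fun _ => p); split.
  by case.
move=> f [f0 _]; rewrite /pairing big_ord0 subr0 big1 //.
by move=> i _; rewrite zpe -x0p f0 mulr0.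
Unshelve. all: by end_near.
Qed.
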